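(* Let $\Lambda$ be a $\sigma$-finite measure on $\mathcal Y\subseteq\mathbb R$, let $\gamma\in\mathbb R\setminus\{0,-1\}$, let $Q_1,\dots,Q_k$ be probability measures on $\mathcal Y$ mutually absolutely continuous with $\Lambda$ with densities $q_j=\mathrm dQ_j/\mathrm d\Lambda$, and let $w_1,\dots,w_k>0$. Suppose that $p^{\rm opt}(y)=z_w\big\{\sum_{j=1}^k w_j q_j(y)^\gamma\big\}^{1/\gamma}$, with $z_w>0$ the constant making $\int p^{\rm opt}\mathrm d\Lambda=1$, is well defined, and let $P^{\rm opt}$ be the probability measure with density $p^{\rm opt}$. Define, for probability measures $P$ mutually absolutely continuous with $\Lambda$ (with all integrals below finite), $$A(P)=\sum_{j=1}^k w_j D^*_\gamma(P,Q_j;\Lambda),\qquad D^*_\gamma(P,Q;\Lambda)=-\frac1\gamma\frac{\int p\,q^\gamma\,\mathrm d\Lambda}{\big(\int p^{\gamma+1}\mathrm d\Lambda\big)^{1/(\gamma+1)}}+\frac1\gamma\Big(\int q^{\gamma+1}\mathrm d\Lambda\Big)^{\gamma/(\gamma+1)},$$ where $p=\mathrm dP/\mathrm d\Lambda$, $q=\mathrm dQ/\mathrm d\Lambda$. Then $P^{\rm opt}$ is the unique minimizer of $A$: $A(P)\ge A(P^{\rm opt})$ for all such $P$, with equality if and only if $P=P^{\rm opt}$.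
   Context: $D^*_\gamma$ is called the dual $\gamma$-divergence. All measures considered are probability measures on $\mathcal Y$ mutually absolutely continuous with $\Lambda$, and all integrals appearing are assumed finite. *)

(* Defs.v *)
From HB Require Import structures.
From mathcomp Require Import all_boot all_order all_algebra.
From mathcomp Require Import all_classical all_reals all_analysis.
Set Implicit Arguments. Unset Strict Implicit. Unset Printing Implicit Defensive.
Import Order.TTheory GRing.Theory Num.Theory.
Local Open Scope classical_set_scope.
Local Open Scope ring_scope.

(* The sample space Y is modelled as R with its Borel sigma-algebra. *)

Definition is_density (R : realType) (Lam : {measure set R -> \bar R})
  (P : set R -> \bar R) (p : R -> R) : Prop :=
  [/\ measurable_fun setT p, (forall x, 0 <= p x) &
      forall A, measurable A -> P A = (\int[Lam]_(x in A) (p x)%:E)%E].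

Definition mutually_ac (R : realType) (Lam : {measure set R -> \bar R})
  (P : {measure set R -> \bar R}) : Prop :=
  P `<< Lam /\ Lam `<< P.

Definition finite_integrals (R : realType) (Lam : {measure set R -> \bar R})
  (g : R) (p q : R -> R) : Prop :=
  [/\ Lam.-integrable setT (fun x => (p x * q x `^ g)%:E),
      Lam.-integrable setT (fun x => (p x `^ (g + 1))%:E) &
      Lam.-integrable setT (fun x => (q x `^ (g + 1))%:E)].

Definition dual_gamma_div (R : realType) (Lam : {measure set R -> \bar R})
  (g : R) (p q : R -> R) : R :=
  - g^-1 * Rintegral Lam setT (fun x => p x * q x `^ g)
      / (Rintegral Lam setT (fun x => p x `^ (g + 1))) `^ (g + 1)^-1
  + g^-1 * (Rintegral Lam setT (fun x => q x `^ (g + 1))) `^ (g / (g + 1)).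

Definition objA (R : realType) (Lam : {measure set R -> \bar R}) (g : R)
  (k : nat) (w : 'I_k -> R) (q : 'I_k -> R -> R) (p : R -> R) : R :=
  \sum_(j < k) w j * dual_gamma_div Lam g p (q j).

Definition popt_unnorm (R : realType) (g : R) (k : nat) (w : 'I_k -> R)
  (q : 'I_k -> R -> R) (x : R) : R :=
  (\sum_(j < k) w j * q j x `^ g) `^ g^-1.

Definition popt (R : realType) (Lam : {measure set R -> \bar R}) (g : R)
  (k : nat) (w : 'I_k -> R) (q : 'I_k -> R -> R) (x : R) : R :=
  (Rintegral Lam setT (popt_unnorm g w q))^-1 * popt_unnorm g w q x.

(* Main.v *)
Require Import Defs.
From HB Require Import structures.
From mathcomp Require Import all_boot all_order all_algebra.
From mathcomp Require Import all_classical all_reals all_analysis.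
From mathcomp Require Import measurable_realfun.
From mathcomp Require Import ring lra.
Import Order.TTheory GRing.Theory Num.Theory.
Local Open Scope classical_set_scope.
Local Open Scope ring_scope.

Section Young.
Variable R : realType.

Lemma ln_le_sub1 (x : R) : 0 < x -> ln x <= x - 1 /\ (x != 1 -> ln x < x - 1).
Proof.
move=> x0; split.
  have := expR_ge1Dx (ln x); rewrite lnK ?posrE //; lra.
move=> x1; have : ln x != 0.
  apply: contra x1 => /eqP h; apply/eqP; rewrite -(lnK (x:=x)) ?posrE// h expR0 //.
move/expR_gt1Dx; rewrite lnK ?posrE //; lra.
Qed.

Lemma young_pos (th a b : R) : 0 < th < 1 -> 0 < a -> 0 < b ->
  a `^ th * b `^ (1 - th) <= th * a + (1 - th) * b /\
  (a != b -> a `^ th * b `^ (1 - th) < th * a + (1 - th) * b).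
Proof.
move=> /andP[th0 th1] a0 b0.
set m := th * a + (1 - th) * b.
have m0 : 0 < m by rewrite /m; apply: addr_gt0; apply: mulr_gt0 => //; lra.
have lnam : ln (a / m) = ln a - ln m.
  by rewrite lnM ?posrE ?invr_gt0// lnV ?posrE.
have lnbm : ln (b / m) = ln b - ln m.
  by rewrite lnM ?posrE ?invr_gt0// lnV ?posrE.
have [ha ha'] := @ln_le_sub1 (a/m) (divr_gt0 a0 m0).
have [hb hb'] := @ln_le_sub1 (b/m) (divr_gt0 b0 m0).
have sum0 : th * (a / m - 1) + (1 - th) * (b / m - 1) = 0.
  rewrite !mulrBr !mulr1 mulrA [(1 - th) * (b / m)]mulrA.
  have -> : th * a / m - th + ((1 - th) * b / m - (1 - th)) = m / m - 1.
    rewrite /m mulrDl; lra.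
  by rewrite divff ?gt_eqF // subrr.
have E : a `^ th * b `^ (1 - th) = expR (th * ln a + (1 - th) * ln b).
  by rewrite /powR !gt_eqF // expRD.
have Em : m = expR (ln m) by rewrite lnK ?posrE.
split.
  rewrite E [in X in _ <= X]Em ler_expR.
  have : th * ln (a / m) + (1 - th) * ln (b / m) <= 0.
    rewrite -sum0; apply: lerD; apply: ler_wpM2l => //; lra.
  rewrite lnam lnbm; lra.
move=> ab.
have am : a / m != 1.
  apply: contra ab => /eqP h.
  have am' : a = m by apply: (mulIf (x:=m^-1)); rewrite ?invr_eq0 ?gt_eqF// mulfV ?gt_eqF//.
  apply/eqP; move: am'; rewrite /m => am'.
  have : (1 - th) * a = (1 - th) * b by lra.
  by move/mulfI; apply; lra.
rewrite E [in X in _ < X]Em ltr_expR.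
have : th * ln (a / m) + (1 - th) * ln (b / m) < 0.
  rewrite -sum0; apply: ltr_leD.
    by rewrite ltr_pM2l //; apply: ha'.
  by apply: ler_wpM2l => //; lra.
rewrite lnam lnbm; lra.
Qed.

Lemma young {th a b : R} : 0 < th < 1 -> 0 <= a -> 0 <= b ->
  a `^ th * b `^ (1 - th) <= th * a + (1 - th) * b /\
  (a != b -> a `^ th * b `^ (1 - th) < th * a + (1 - th) * b).
Proof.
move=> /[dup] thI /andP[th0 th1] a0 b0.
have th0' : th != 0 by rewrite gt_eqF.
have th1' : 1 - th != 0 by rewrite subr_eq0 eq_sym lt_eqF.
have [a00|ap] := eqVneq a 0.
  subst a; rewrite powR0 // mul0r mulr0 add0r; split.
    by apply: mulr_ge0 => //; lra.
  move=> b00; apply: mulr_gt0; first lra.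
  by rewrite lt_def eq_sym b00 b0.
have [b00|bp] := eqVneq b 0.
  subst b; rewrite powR0 // mulr0 mulr0 addr0; split.
    by apply: mulr_ge0 => //; lra.
  move=> _; apply: mulr_gt0; first lra.
  by rewrite lt_def ap a0.
apply: young_pos => //.
  by rewrite lt_def ap a0.
by rewrite lt_def bp b0.
Qed.

End Young.
Arguments young {R th a b}.
Section MH.
Context d (T : measurableType d) (R : realType) (mu : {measure set T -> \bar R}).
Local Notation iR f := (mu.-integrable setT (EFin \o f)).
Local Notation RI f := (Rintegral mu setT f).

Lemma iZl (k : R) (f : T -> R) : iR f -> iR (fun x => k * f x).
Proof.
move=> hf; have := integrableZl measurableT k hf; apply: (eq_integrable measurableT) => x _ /=.
by rewrite EFinM.
Qed.

Lemma iZr (k : R) (f : T -> R) : iR f -> iR (fun x => f x * k).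
Proof.
move=> /(iZl k); apply: (eq_integrable measurableT) => x _ /=; by rewrite mulrC.
Qed.

Lemma iD (f g : T -> R) : iR f -> iR g -> iR (fun x => f x + g x).
Proof.
move=> hf hg; have := integrableD measurableT hf hg.
apply: (eq_integrable measurableT) => x _ /=; by rewrite EFinD.
Qed.

Lemma iB (f g : T -> R) : iR f -> iR g -> iR (fun x => f x - g x).
Proof.
move=> hf hg; have := integrableB measurableT hf hg.
apply: (eq_integrable measurableT) => x _ /=; by rewrite EFinB.
Qed.

Lemma mR (f : T -> R) : iR f -> measurable_fun setT f.
Proof. by move/measurable_int/measurable_EFinP. Qed.

Lemma RintE (f : T -> R) : iR f -> (RI f)%:E = (\int[mu]_x (f x)%:E)%E.
Proof. by move=> hf; rewrite /Rintegral fineK //; exact: integrable_fin_num. Qed.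

Lemma Rint_ae0 {m : T -> R} : measurable_fun setT m ->
  (\forall x \ae mu, m x = 0) -> RI m = 0.
Proof.
move=> mm hm; rewrite /Rintegral.
rewrite (ae_eq_integral (cst 0%E)) //.
- by rewrite integral0.
- exact/measurable_EFinP.
- by apply: filterS hm => x -> _.
Qed.

Lemma Rint_ae_ge0 {G : T -> R} : iR G -> (\forall x \ae mu, 0 <= G x) ->
  0 <= RI G /\ (RI G = 0 -> \forall x \ae mu, G x = 0).
Proof.
move=> iG hG.
have mG : measurable_fun setT (EFin \o G) := measurable_int _ iG.
have E : (\int[mu]_x (G x)%:E = \int[mu]_x `|(G x)%:E|)%E.
  apply: ae_eq_integral => //.
  - exact: measurableT_comp.
  - by apply: filterS hG => x Gx _; rewrite gee0_abs // lee_fin.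
have fin : (\int[mu]_x `|(G x)%:E|)%E \is a fin_num.
  by rewrite ge0_fin_numE ?integral_ge0 //; case/integrableP: iG.
rewrite /Rintegral E; split.
  by apply: fine_ge0; apply: integral_ge0.
move=> /eqP; rewrite fine_eq0 // => /eqP /(ae_eq_integral_abs mu measurableT mG) h.
by apply: filterS h => x /(_ I) /= [].
Qed.


Lemma powR_div (a c t : R) : 0 <= a -> 0 < c -> (a / c) `^ t = a `^ t / c `^ t.
Proof.
move=> a0 c0; rewrite powRM // ?invr_ge0 ?ltW//; congr (_ * _).
by rewrite -powR_inv1 ?ltW// -powRrM mulN1r powRN.
Qed.

Lemma holder_ae (f h m : T -> R) th : 0 < th < 1 ->
  (forall x, 0 <= f x) -> (forall x, 0 <= h x) ->
  iR f -> iR h -> iR m ->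
  (\forall x \ae mu, m x = f x `^ th * h x `^ (1 - th)) ->
  RI m <= RI f `^ th * RI h `^ (1 - th) /\
  (0 < RI f -> 0 < RI h -> RI m = RI f `^ th * RI h `^ (1 - th) ->
     \forall x \ae mu, f x * RI h = h x * RI f).
Proof.
move=> thI f0 h0 iF iH iM hm.
have [th0 th1] : 0 < th /\ th < 1 by apply/andP.
have thn0 : th != 0 by rewrite gt_eqF.
have th1n0 : 1 - th != 0 by rewrite subr_eq0 eq_sym lt_eqF.
have F0 : 0 <= RI f by apply: Rintegral_ge0.
have H0 : 0 <= RI h by apply: Rintegral_ge0.
have [Fz|Fp] := eqVneq (RI f) 0.
  have f0ae : \forall x \ae mu, 0 <= f x by apply: aeW.
  have [_ /(_ Fz) fz] := Rint_ae_ge0 iF f0ae.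
  have mz : RI m = 0.
    apply: Rint_ae0; first exact: mR.
    by apply: filterS2 fz hm => x fx0 ->; rewrite fx0 powR0 // mul0r.
  rewrite mz Fz; split; first by apply: mulr_ge0; apply: powR_ge0.
  by rewrite ltxx.
have [Hz|Hp] := eqVneq (RI h) 0.
  have h0ae : \forall x \ae mu, 0 <= h x by apply: aeW.
  have [_ /(_ Hz) hz] := Rint_ae_ge0 iH h0ae.
  have mz : RI m = 0.
    apply: Rint_ae0; first exact: mR.
    by apply: filterS2 hz hm => x hx0 ->; rewrite hx0 powR0 // mulr0.
  rewrite mz Hz; split; first by apply: mulr_ge0; apply: powR_ge0.
  by move=> _; rewrite ltxx.
have Fg : 0 < RI f by rewrite lt_def Fp F0.
have Hg : 0 < RI h by rewrite lt_def Hp H0.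
set F := RI f; set H := RI h.
set K := F `^ th * H `^ (1 - th).
have Kg : 0 < K by apply: mulr_gt0; apply: powR_gt0.
pose G x := th * (f x / F) + (1 - th) * (h x / H) - m x / K.
have iA : iR (fun x => th * (f x / F) + (1 - th) * (h x / H)).
  by apply: iD; apply: iZl; apply: iZr.
have iG : iR G by apply: iB => //; apply: iZr.
have RG : RI G = 1 - RI m / K.
  rewrite /G RintegralB //; last by apply: iZr.
  rewrite RintegralD //; try by apply: iZl; apply: iZr.
  rewrite RintegralZl //; last by apply: iZr.
  rewrite RintegralZl //; last by apply: iZr.
  rewrite !RintegralZr // -/F -/H !divff ?gt_eqF // !mulr1; lra.
have key : forall x, m x = f x `^ th * h x `^ (1 - th) ->
    m x / K = (f x / F) `^ th * (h x / H) `^ (1 - th).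
  by move=> x ->; rewrite !powR_div // mulf_div.
have Gae : \forall x \ae mu, 0 <= G x.
  apply: filterS hm => x hx; rewrite /G key // subr_ge0.
  by apply: (young thI (divr_ge0 (f0 x) F0) (divr_ge0 (h0 x) H0)).1.
have [RG0 RGz] := Rint_ae_ge0 iG Gae.
split.
  by move: RG0; rewrite RG subr_ge0 ler_pdivrMr // mul1r.
move=> _ _ Hm.
have : RI G = 0 by rewrite RG Hm -/K divff ?gt_eqF // subrr.
move/RGz => Gz.
apply: filterS2 Gz hm => x Gx hx.
case: (eqVneq (f x / F) (h x / H)) => [e|ne].
  by move/eqP: e; rewrite eqr_div ?(lt0r_neq0 Fg) ?(lt0r_neq0 Hg) // => /eqP.
have := (young thI (divr_ge0 (f0 x) F0) (divr_ge0 (h0 x) H0)).2 ne.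
by move: Gx; rewrite /G key // => Gx; lra.
Qed.


Lemma Rint_ae_eq {f g : T -> R} : measurable_fun setT f -> measurable_fun setT g ->
  (\forall x \ae mu, f x = g x) -> RI f = RI g.
Proof.
move=> mf mg h; rewrite /Rintegral (ae_eq_integral (EFin \o g)) //.
- exact/measurable_EFinP.
- exact/measurable_EFinP.
- by apply: filterS h => x /= -> _.
Qed.

Lemma pos_pow {f : T -> R} (r : R) : r != 0 -> (forall x, 0 <= f x) ->
  measurable_fun setT f -> iR (fun x => f x `^ r) -> 0 < RI f ->
  0 < RI (fun x => f x `^ r).
Proof.
move=> r0 f0 mf ifr fpos.
have h0 : \forall x \ae mu, 0 <= f x `^ r by apply: aeW => x; apply: powR_ge0.
have [g0 gz] := Rint_ae_ge0 ifr h0.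
rewrite lt_def g0 andbT; apply/eqP => /gz z.
have : RI f = 0.
  by apply: Rint_ae0 => //; apply: filterS z => x /powR_eq0_eq0.
by move=> e; move: fpos; rewrite e ltxx.
Qed.

Lemma Rint_sum (I : Type) (s : seq I) (F : I -> T -> R) :
  (forall i, iR (F i)) ->
  iR (fun x => \sum_(i <- s) F i x) /\
  RI (fun x => \sum_(i <- s) F i x) = \sum_(i <- s) RI (F i).
Proof.
move=> iF; elim: s => [|i s [IH1 IH2]].
  have e : (fun x => \sum_(i <- [::]) F i x) = fun=> 0.
    by apply/funext => x; rewrite big_nil.
  rewrite e big_nil; split.
    by apply: (eq_integrable measurableT) (integrable0 mu setT).
  by apply: Rint_ae0 => //; apply: aeW.
have e : (fun x => \sum_(j <- i :: s) F j x) = fun x => F i x + \sum_(j <- s) F j x.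
  by apply/funext => x; rewrite big_cons.
rewrite e big_cons; split; first exact: iD.
by rewrite RintegralD // IH2.
Qed.

End MH.
Arguments Rint_ae_ge0 {d T R mu G}.
Arguments Rint_ae0 {d T R mu m}.
Arguments Rint_ae_eq {d T R mu f g}.
Arguments pos_pow {d T R mu f}.

Lemma dens_int (R : realType) (Lam : {measure set R -> \bar R})
  (P : probability R R) p : is_density Lam P p ->
  Lam.-integrable setT (EFin \o p) /\ Rintegral Lam setT p = 1.
Proof.
case=> mp p0 hP; have h := hP setT measurableT.
rewrite probability_setT in h.
split; last by rewrite /Rintegral -h.
apply/integrableP; split; first exact/measurable_EFinP.
under eq_integral => x _ do rewrite gee0_abs ?lee_fin //.
by rewrite -h ltey.
Qed.

Lemma dens_pos (R : realType) (Lam : {measure set R -> \bar R})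
  (P : {measure set R -> \bar R}) p : Lam `<< P -> is_density Lam P p ->
  \forall x \ae Lam, 0 < p x.
Proof.
move=> dom [mp p0 hP].
have mN : measurable [set x | p x = 0].
  by have := mp measurableT [set 0] (measurable_set1 0); rewrite setTI.
have PN : P [set x | p x = 0] = 0.
  rewrite hP //; under eq_integral => x /[!inE] -> do [].
  exact: integral0.
have LN := (null_content_dominatesP _ _).1 dom _ mN PN.
exists [set x | p x = 0]; split => // x /= /negP.
by rewrite lt_def p0 andbT negbK => /eqP.
Qed.

Lemma objA_dec (R : realType) (Lam : {measure set R -> \bar R}) g k
  (w : 'I_k -> R) q p :
  objA Lam g w q p =
  - g^-1 * (\sum_(j < k) w j * Rintegral Lam setT (fun x => p x * q j x `^ g))
    / (Rintegral Lam setT (fun x => p x `^ (g + 1))) `^ (g + 1)^-1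
  + \sum_(j < k) w j * (g^-1 *
      (Rintegral Lam setT (fun x => q j x `^ (g + 1))) `^ (g / (g + 1))).
Proof.
rewrite /objA /dual_gamma_div mulr_sumr mulr_suml -big_split /=.
by apply: eq_bigr => j _; ring.
Qed.
Arguments dens_int {R Lam P p}.
Arguments dens_pos {R Lam P p}.
Arguments holder_ae {d T R mu f h m th}.

Lemma lnMp (R : realType) (a b : R) : 0 < a -> 0 < b -> ln (a * b) = ln a + ln b.
Proof. by move=> a0 b0; rewrite lnM ?posrE. Qed.

Lemma lnDp (R : realType) (a b : R) : 0 < a -> 0 < b -> ln (a / b) = ln a - ln b.
Proof. by move=> a0 b0; rewrite lnM ?posrE ?invr_gt0 // lnV ?posrE. Qed.
Arguments iZl {d T R mu} k {f}.
Arguments iZr {d T R mu} k {f}.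
Arguments iD {d T R mu f g}.
Arguments iB {d T R mu f g}.
Arguments mR {d T R mu f}.
Arguments RintE {d T R mu f}.
Arguments Rint_sum {d T R mu I}.

Lemma ln_le (R : realType) (a b : R) : 0 < a -> 0 < b -> a <= b -> ln a <= ln b.
Proof. by move=> a0 b0; rewrite ler_ln ?posrE. Qed.

Lemma ln_le_inv (R : realType) (a b : R) : 0 < a -> 0 < b -> ln a <= ln b -> a <= b.
Proof. by move=> a0 b0; rewrite ler_ln ?posrE. Qed.

Lemma ln_eq_inv (R : realType) (a b : R) : 0 < a -> 0 < b -> ln a = ln b -> a = b.
Proof. by move=> a0 b0; apply: ln_inj; rewrite posrE. Qed.
Arguments ln_le {R a b}.
Arguments ln_le_inv {R a b}.
Arguments ln_eq_inv {R a b}.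
Arguments lnMp {R a b}.
Arguments lnDp {R a b}.
Lemma lin_step (R : realFieldType) (s th a b c : R) : (1 - s) * th = 1 -> (1 - s) * (1 - th) = - s ->
  0 <= 1 - s -> c <= th * a + (1 - th) * b -> (1 - s) * c <= a - s * b.
Proof. move=> id1 id2 s0 lH1.
have := ler_wpM2l s0 lH1.
by rewrite mulrDr !mulrA id1 id2 mul1r mulNr.
Qed.
Lemma lin_eq (R : realFieldType) (s th a b c : R) : (1 - s) * th = 1 -> th * s = - (1 - th) ->
  a - s * b = (1 - s) * c -> c = th * a + (1 - th) * b.
Proof. move=> id1 id3 le.
have := congr1 (fun t => th * t) le.
rewrite /= mulrBr mulrA id3 mulrA [th * (1 - s)]mulrC id1 mul1r => <-.
ring.
Qed.
Arguments lin_step {R s th a b c}.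
Arguments lin_eq {R s th a b c}.

Theorem mainTheorem2 (R : realType) (Lam : {sigma_finite_measure set R -> \bar R})
  (g : R) (k : nat) (Q : 'I_k -> probability R R) (q : 'I_k -> R -> R)
  (w : 'I_k -> R) :
  g != 0 -> g != -1 ->
  (forall j, mutually_ac Lam (Q j)) ->
  (forall j, is_density Lam (Q j) (q j)) ->
  (forall j, 0 < w j) ->
  (* p^opt is well defined: the normalizing integral is finite and positive *)
  Lam.-integrable setT (fun x => (popt_unnorm g w q x)%:E) ->
  0 < Rintegral Lam setT (popt_unnorm g w q) ->
  forall Popt : probability R R,
  is_density Lam Popt (popt Lam g w q) ->
  (forall j, finite_integrals Lam g (popt Lam g w q) (q j)) ->
  forall (P : probability R R) (p : R -> R),
  mutually_ac Lam P -> is_density Lam P p ->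
  (forall j, finite_integrals Lam g p (q j)) ->
  objA Lam g w q (popt Lam g w q) <= objA Lam g w q p /\
  (objA Lam g w q p = objA Lam g w q (popt Lam g w q) <->
     forall A, measurable A -> P A = Popt A).
Proof.
case: k Q q w => [|k] Q q w gn0 gn1 hQac hQd hw hui hZ Popt hPo hfo P p hPac hPd hfp.
  exfalso; move: hZ.
  rewrite (eq_Rintegral _ (g := fun=> 0)); first by rewrite Rint_ae0 ?ltxx //; apply: aeW.
  by move=> x _; rewrite /popt_unnorm big_ord0 powR0 // invr_eq0.
set u := popt_unnorm g w q.
have hui' : Lam.-integrable setT (EFin \o u) := hui.
have hZ' : 0 < Rintegral Lam setT u := hZ.
have poptE' : forall x, (popt Lam g w q) x = (Rintegral Lam setT u)^-1 * u x by [].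
have r0 : g + 1 != 0 by rewrite addr_eq0.
have u0 : forall x, 0 <= u x by move=> x; apply: powR_ge0.
have ug : forall x, u x `^ g = \sum_(j < k.+1) w j * q j x `^ g.
  move=> x; rewrite /u /popt_unnorm -powRrM mulVf // powRr1 //.
  by apply: sumr_ge0 => j _; apply: mulr_ge0; [apply: ltW|apply: powR_ge0].
have upos : forall x, 0 < q ord0 x -> 0 < u x.
  move=> x qx; rewrite /u /popt_unnorm; apply: powR_gt0.
  rewrite big_ord_recl.
  have h1 : 0 < w ord0 * q ord0 x `^ g by apply: mulr_gt0 => //; apply: powR_gt0.
  have h2 : 0 <= \sum_(i < k) w (lift ord0 i) * q (lift ord0 i) x `^ g.
    by apply: sumr_ge0 => j _; apply: mulr_ge0; [apply: ltW|apply: powR_ge0].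
  lra.
clearbody u; clear hui hZ.
have [Z HZ] : exists Z, Z = Rintegral Lam setT u by eexists.
have poptE : forall x, (popt Lam g w q) x = Z^-1 * u x by move=> x; rewrite poptE' HZ.
have Zp : 0 < Z by rewrite HZ.
have [ip p1] := dens_int hPd.
have [mp p0 _] := hPd.
have mu' : measurable_fun setT u by exact: (mR hui').
have [_ iPor _] := hfo ord0.
have [_ ipr _] := hfp ord0.
have iUr : Lam.-integrable setT (EFin \o (fun x => u x `^ (g + 1))).
  have := iZl ((Z^-1) `^ (g + 1))^-1 iPor.
  apply: (eq_integrable measurableT) => x _ /=.
  congr (_%:E); rewrite poptE powRM ?u0 ?invr_ge0 ?ltW // mulrA mulVf ?mul1r //.
  by rewrite gt_eqF // powR_gt0 // invr_gt0.
have [M HM] : exists M : (R -> R) -> R,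
    forall pp, M pp = Rintegral Lam setT (fun x => pp x * u x `^ g).
  by eexists => pp.
have [Pr HPr] : exists Pr : (R -> R) -> R,
    forall pp, Pr pp = Rintegral Lam setT (fun x => pp x `^ (g + 1)).
  by eexists => pp.
have [Kf HKf] : exists Kf : (R -> R) -> R,
    forall pp, Kf pp = M pp / (Pr pp) `^ (g + 1)^-1.
  by eexists => pp.
have [U HU] : exists U, U = Rintegral Lam setT (fun x => u x `^ (g + 1)).
  by eexists.
have [C HC] : exists C, C = \sum_(j < k.+1) w j * (g^-1 *
      (Rintegral Lam setT (fun x => q j x `^ (g + 1))) `^ (g / (g + 1))).
  by eexists.
have Msum : forall pp : R -> R,
    (forall j, Lam.-integrable setT (fun x => (pp x * q j x `^ g)%:E)) ->
    Lam.-integrable setT (EFin \o (fun x => pp x * u x `^ g)) /\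
    M pp = \sum_(j < k.+1) w j * Rintegral Lam setT (fun x => pp x * q j x `^ g).
  move=> pp hpp.
  have [i1 e1] := Rint_sum (index_enum 'I_k.+1)
     (fun j x => w j * (pp x * q j x `^ g)) (fun j => iZl (w j) (hpp j)).
  have E : (fun x => pp x * u x `^ g) =
      (fun x => \sum_(j <- index_enum 'I_k.+1) w j * (pp x * q j x `^ g)).
    by apply/funext => x; rewrite ug mulr_sumr; apply: eq_bigr => j _; ring.
  rewrite HM E; split => //; rewrite e1; apply: eq_bigr => j _.
  by rewrite RintegralZl //; apply: hpp.
have objE : forall pp : R -> R,
    (forall j, Lam.-integrable setT (fun x => (pp x * q j x `^ g)%:E)) ->
    objA Lam g w q pp = - g^-1 * Kf pp + C.
  by move=> pp hpp; rewrite objA_dec HKf (Msum pp hpp).2 HPr HC mulrA.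
have Upos : 0 < U by rewrite HU; apply: (pos_pow (g + 1)) => //.
have Prp : 0 < Pr p by rewrite HPr; apply: (pos_pow (g + 1)) => //; rewrite p1.
have Mo : M (popt Lam g w q) = Z^-1 * U.
  rewrite HM HU (eq_Rintegral _ (g := fun x => Z^-1 * u x `^ (g + 1))).
    by rewrite RintegralZl.
  move=> x _; rewrite poptE -mulrA; congr (_ * _).
  by rewrite powRD ?powRr1 1?mulrC // (negPf r0).
have Pro : Pr (popt Lam g w q) = (Z^-1) `^ (g + 1) * U.
  rewrite HPr HU (eq_Rintegral _ (g := fun x => (Z^-1) `^ (g + 1) * u x `^ (g + 1))).
    by rewrite RintegralZl.
  by move=> x _; rewrite poptE powRM // invr_ge0 ltW.
have Ko : Kf (popt Lam g w q) = U `^ (1 - (g + 1)^-1).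
  rewrite HKf Mo Pro powRM ?powR_ge0 ?ltW // -powRrM mulfV // powRr1 ?invr_ge0 ?ltW //.
  rewrite -mulf_div divff ?mul1r ?invr_eq0 ?gt_eqF //.
  by rewrite powRB ?powRr1 ?ltW // (gt_eqF Upos) implybT.
have hpq : forall j, Lam.-integrable setT (fun x => (p x * q j x `^ g)%:E).
  by move=> j; case: (hfp j).
have hoq : forall j, Lam.-integrable setT
    (fun x => (popt Lam g w q x * q j x `^ g)%:E).
  by move=> j; case: (hfo j).
have finl : forall l, (\forall x \ae Lam, p x = l * u x) ->
    forall A, measurable A -> P A = Popt A.
  move=> l hl.
  have mlu : measurable_fun setT (fun x => l * u x) by apply: mR (iZl l hui').
  have e : Rintegral Lam setT p = l * Z.
    by rewrite (Rint_ae_eq mp mlu hl) RintegralZl // -HZ.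
  have lZ : l = Z^-1.
    by move: e; rewrite p1 => e; rewrite -[Z^-1]mul1r e mulfK // gt_eqF.
  have hae : \forall x \ae Lam, p x = popt Lam g w q x.
    by apply: filterS hl => x ->; rewrite poptE lZ.
  move=> A mA.
  have [_ _ hP3] := hPd; have [mo _ hPo3] := hPo.
  rewrite hP3 // hPo3 //.
  apply: ae_eq_integral => //.
  - by apply: measurable_funTS; apply/measurable_EFinP.
  - by apply: measurable_funTS; apply/measurable_EFinP.
  - by apply: filterS hae => x /= -> _.
have hD : (forall A, measurable A -> P A = Popt A) ->
    objA Lam g w q p = objA Lam g w q (popt Lam g w q).
  move=> hA.
  have [_ _ hP3] := hPd; have [mo _ hPo3] := hPo.
  have hae0 := integral_ae_eq measurableT (g := EFin \o popt Lam g w q)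
    (f := EFin \o p) ip ((measurable_EFinP _ _).2 mo)
    (fun E _ mE => (etrans (esym (hP3 E mE)) (etrans (hA E mE) (hPo3 E mE)))).
  have hae : \forall x \ae Lam, p x = popt Lam g w q x.
    by apply: filterS hae0 => x /(_ I) [].
  rewrite /objA; apply: eq_bigr => j _; rewrite /dual_gamma_div.
  have e1 : Rintegral Lam setT (fun x => p x * q j x `^ g) =
      Rintegral Lam setT (fun x => popt Lam g w q x * q j x `^ g).
    apply: Rint_ae_eq.
    - exact: (mR (f := fun x => p x * q j x `^ g) (hpq j)).
    - exact: (mR (f := fun x => popt Lam g w q x * q j x `^ g) (hoq j)).
    - by apply: filterS hae => x ->.
  have e2 : Rintegral Lam setT (fun x => p x `^ (g + 1)) =
      Rintegral Lam setT (fun x => popt Lam g w q x `^ (g + 1)).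
    apply: Rint_ae_eq.
    - exact: (mR (f := fun x => p x `^ (g + 1)) ipr).
    - exact: (mR (f := fun x => popt Lam g w q x `^ (g + 1)) iPor).
    - by apply: filterS hae => x ->.
  by rewrite e1 e2.
have cpos : 0 < g -> Kf p <= Kf (popt Lam g w q) /\
    (Kf p = Kf (popt Lam g w q) -> exists l, \forall x \ae Lam, p x = l * u x).
  move=> gp.
  have thI : 0 < (g + 1)^-1 < 1.
    have g1 : 0 < g + 1 by clear -gp; lra.
    apply/andP; split; first by rewrite invr_gt0.
    rewrite invf_lt1; last exact: g1.
    by clear -gp; lra.
  set th := (g + 1)^-1 in thI Ko *.
  have [ipug _] := Msum p hpq.
  have hm : \forall x \ae Lam, p x * u x `^ g =
      (p x `^ (g + 1)) `^ th * (u x `^ (g + 1)) `^ (1 - th).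
    apply: aeW => x; rewrite -!powRrM /th (mulfV r0) (powRr1 (p0 x)).
    by rewrite mulrBr mulr1 (mulfV r0) addrK.
  have [H1 H2] := holder_ae (f := fun x => p x `^ (g + 1))
    (h := fun x => u x `^ (g + 1)) (m := fun x => p x * u x `^ g)
    thI (fun x => powR_ge0 _ _) (fun x => powR_ge0 _ _) ipr iUr ipug hm.
  rewrite -(HM p) -(HPr p) -HU in H1 H2.
  have Prth : 0 < Pr p `^ th by apply: powR_gt0.
  split.
    by rewrite Ko HKf (ler_pdivrMr _ _ Prth) mulrC.
  move=> e.
  have eq : M p = Pr p `^ th * U `^ (1 - th).
    by move: e; rewrite Ko HKf => e; rewrite -e mulrC (divfK (lt0r_neq0 Prth)).
  have hae := H2 Prp Upos eq.
  exists ((Pr p / U) `^ th).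
  apply: filterS hae => x hx.
  have e2 : p x `^ (g + 1) = u x `^ (g + 1) * (Pr p / U).
    by rewrite mulrA -hx (mulfK (lt0r_neq0 Upos)).
  have pe : p x = (p x `^ (g + 1)) `^ th.
    by rewrite -powRrM /th (mulfV r0) (powRr1 (p0 x)).
  rewrite [LHS]pe e2 (powRM _ (powR_ge0 _ _) (divr_ge0 (ltW Prp) (ltW Upos))).
  by rewrite -powRrM /th (mulfV r0) (powRr1 (u0 x)) mulrC.
have cneg : g < 0 -> Kf (popt Lam g w q) <= Kf p /\
    (Kf p = Kf (popt Lam g w q) -> exists l, \forall x \ae Lam, p x = l * u x).
  move=> gn.
  have [ipug _] := Msum p hpq.
  have uae : \forall x \ae Lam, 0 < u x.
    by apply: filterS (dens_pos (hQac ord0).2 (hQd ord0)) => x; apply: upos.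
  have pae : \forall x \ae Lam, 0 < p x := dens_pos hPac.2 hPd.
  have M0 : 0 <= M p.
    by rewrite HM; apply: Rintegral_ge0 => x _; apply: mulr_ge0; [exact: p0|exact: powR_ge0].
  have fge0 : forall x, 0 <= p x * u x `^ g.
    by move=> x; apply: mulr_ge0; [exact: p0|exact: powR_ge0].
  have Kpe : ln (Kf p) = ln (M p) - (g + 1)^-1 * ln (Pr p) -> True by [].
  have [ga|gb] : -1 < g \/ g < -1.
    by move: gn1; rewrite neq_lt => /orP [] ?; [right|left].
    have g1 : 0 < g + 1 by clear -ga; lra.
    have thI : 0 < g + 1 < 1 by apply/andP; split; clear -ga gn; lra.
    have hm : \forall x \ae Lam, p x `^ (g + 1) =
        (p x * u x `^ g) `^ (g + 1) * (u x `^ (g + 1)) `^ (1 - (g + 1)).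
      apply: filterS uae => x ux.
      rewrite (powRM _ (p0 x) (powR_ge0 _ _)) -!powRrM -mulrA -powRD.
        rewrite (_ : g * (g + 1) + (g + 1) * (1 - (g + 1)) = 0); last by ring.
        by rewrite powRr0 mulr1.
      by rewrite (gt_eqF ux) implybT.
    have [H1 H2] := holder_ae (f := fun x => p x * u x `^ g)
      (h := fun x => u x `^ (g + 1)) (m := fun x => p x `^ (g + 1))
      thI fge0 (fun x => powR_ge0 _ _) ipug iUr ipr hm.
    rewrite -(HM p) -(HPr p) -HU in H1 H2.
    have Mpos : 0 < M p.
      rewrite lt_def M0 andbT; apply/eqP => Mz; move: H1.
      rewrite Mz (powR0 r0) mul0r => H1.
      by move: Prp; rewrite ltNge H1.
    have lH1 : ln (Pr p) <= (g + 1) * ln (M p) + (1 - (g + 1)) * ln U.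
      have := ln_le Prp (mulr_gt0 (powR_gt0 _ Mpos) (powR_gt0 _ Upos)) H1.
      by rewrite (lnMp (powR_gt0 _ Mpos) (powR_gt0 _ Upos)) !ln_powR.
    have lKp : ln (Kf p) = ln (M p) - (g + 1)^-1 * ln (Pr p).
      by rewrite HKf (lnDp Mpos (powR_gt0 _ Prp)) ln_powR.
    have lKo : ln (Kf (popt Lam g w q)) = (1 - (g + 1)^-1) * ln U.
      by rewrite Ko ln_powR.
    have Kpp : 0 < Kf p by rewrite HKf; apply: divr_gt0; [exact: Mpos|apply: powR_gt0; exact: Prp].
    have Kop : 0 < Kf (popt Lam g w q) by rewrite Ko; apply: powR_gt0; exact: Upos.
    split.
      apply: (ln_le_inv Kop Kpp); rewrite lKp lKo.
      have g1i : 0 < (g + 1)^-1 by rewrite invr_gt0.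
      have := ler_wpM2l (ltW g1i) lH1.
      have id : forall a b, (g + 1)^-1 * ((g + 1) * a + (1 - (g + 1)) * b) =
          a + ((g + 1)^-1 - 1) * b.
        by move=> a b; rewrite mulrDr mulrA (mulVf r0) mul1r mulrA mulrBr mulr1 (mulVf r0).
      rewrite id => h.
      move: (ln (M p)) (ln (Pr p)) (ln U) ((g + 1)^-1) h => a b c t h.
      by clear -h; lra.
    move=> e.
    have le : ln (M p) - (g + 1)^-1 * ln (Pr p) = (1 - (g + 1)^-1) * ln U.
      by rewrite -lKp -lKo e.
    have eq : Pr p = M p `^ (g + 1) * U `^ (1 - (g + 1)).
      apply: (ln_eq_inv Prp (mulr_gt0 (powR_gt0 _ Mpos) (powR_gt0 _ Upos))).
      rewrite (lnMp (powR_gt0 _ Mpos) (powR_gt0 _ Upos)) !ln_powR.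
      have := congr1 (fun t => (g + 1) * t) le.
      rewrite /= mulrBr mulrA (mulfV r0) mul1r mulrA mulrBr mulr1 (mulfV r0).
      move: (ln (M p)) (ln (Pr p)) (ln U) => a b c h.
      by clear -h; lra.
    have hae := H2 Mpos Upos eq.
    exists (M p / U).
    apply: filterS2 uae hae => x ux hx.
    have e1 : u x `^ (g + 1) = u x `^ g * u x.
      rewrite powRD; first by rewrite (powRr1 (u0 x)).
      by rewrite (negPf r0).
    rewrite e1 in hx.
    have ugp : 0 < u x `^ g by apply: powR_gt0.
    have hx' : u x `^ g * (p x * U) = u x `^ g * (u x * M p).
      by rewrite mulrA [u x `^ g * p x]mulrC hx mulrA.
    move/(mulfI (lt0r_neq0 ugp)): hx' => hpU.
    rewrite -[p x](mulfK (lt0r_neq0 Upos)) hpU.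
    ring.
  have gr : g + 1 < 0 by clear -gb; lra.
  have thI : 0 < (g + 1) / g < 1.
    have e : (g + 1) / g = (- (g + 1)) / (- g) by rewrite invrN mulrNN.
    have ng : 0 < - g by clear -gn; lra.
    rewrite e; apply/andP; split.
      by apply: divr_gt0; clear -gr gn; lra.
    by rewrite (ltr_pdivrMr _ _ ng) mul1r; clear -gr; lra.
  set th := (g + 1) / g in thI *.
  have hm : \forall x \ae Lam, u x `^ (g + 1) =
      (p x * u x `^ g) `^ th * (p x `^ (g + 1)) `^ (1 - th).
    apply: filterS pae => x px.
    rewrite (powRM _ (p0 x) (powR_ge0 _ _)) -!powRrM mulrAC -powRD.
      rewrite (_ : th + (g + 1) * (1 - th) = 0); last first.
        by rewrite /th; field; rewrite ?gn0 ?r0.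
      rewrite (_ : g * th = g + 1); last by rewrite /th mulrC (mulfVK gn0).
      by rewrite powRr0 mul1r.
    by rewrite (gt_eqF px) implybT.
  have [H1 H2] := holder_ae (f := fun x => p x * u x `^ g)
    (h := fun x => p x `^ (g + 1)) (m := fun x => u x `^ (g + 1))
    thI fge0 (fun x => powR_ge0 _ _) ipug ipr iUr hm.
  rewrite -(HM p) -(HPr p) -HU in H1 H2.
  have th0 : th != 0 by apply: lt0r_neq0; case/andP: thI.
  have Mpos : 0 < M p.
    rewrite lt_def M0 andbT; apply/eqP => Mz; move: H1.
    rewrite Mz (powR0 th0) mul0r => H1.
    by move: Upos; rewrite ltNge H1.
  have lH1 : ln U <= th * ln (M p) + (1 - th) * ln (Pr p).
    have := ln_le Upos (mulr_gt0 (powR_gt0 _ Mpos) (powR_gt0 _ Prp)) H1.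
    by rewrite (lnMp (powR_gt0 _ Mpos) (powR_gt0 _ Prp)) !ln_powR.
  have lKp : ln (Kf p) = ln (M p) - (g + 1)^-1 * ln (Pr p).
    by rewrite HKf (lnDp Mpos (powR_gt0 _ Prp)) ln_powR.
  have lKo : ln (Kf (popt Lam g w q)) = (1 - (g + 1)^-1) * ln U.
    by rewrite Ko ln_powR.
  have Kpp : 0 < Kf p.
    by rewrite HKf; apply: divr_gt0; [exact: Mpos|apply: powR_gt0; exact: Prp].
  have Kop : 0 < Kf (popt Lam g w q) by rewrite Ko; apply: powR_gt0; exact: Upos.
  have id1 : (1 - (g + 1)^-1) * th = 1 by rewrite /th; field; rewrite ?gn0 ?r0.
  have id2 : (1 - (g + 1)^-1) * (1 - th) = - (g + 1)^-1 by rewrite /th; field; rewrite ?gn0 ?r0.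
  split.
    apply: (ln_le_inv Kop Kpp); rewrite lKp lKo.
    have s0 : 0 <= 1 - (g + 1)^-1.
      have : (g + 1)^-1 < 0 by rewrite invr_lt0.
      by move=> h; clear -h; lra.
    exact: (lin_step id1 id2 s0 lH1).
  move=> e.
  have le : ln (M p) - (g + 1)^-1 * ln (Pr p) = (1 - (g + 1)^-1) * ln U.
    by rewrite -lKp -lKo e.
  have id3 : th * (g + 1)^-1 = - (1 - th) by rewrite /th; field; rewrite ?gn0 ?r0.
  have eq : U = M p `^ th * Pr p `^ (1 - th).
    apply: (ln_eq_inv Upos (mulr_gt0 (powR_gt0 _ Mpos) (powR_gt0 _ Prp))).
    rewrite (lnMp (powR_gt0 _ Mpos) (powR_gt0 _ Prp)) !ln_powR.
    exact: (lin_eq id1 id3 le).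
  have hae := H2 Mpos Prp eq.
  exists (Pr p `^ g^-1 / M p `^ g^-1).
  apply: filterS3 pae uae hae => x px ux hx.
  have e1 : p x `^ (g + 1) = p x `^ g * p x.
    rewrite powRD; first by rewrite (powRr1 (p0 x)).
    by rewrite (negPf r0).
  rewrite e1 in hx.
  have hx' : p x * (u x `^ g * Pr p) = p x * (p x `^ g * M p).
    by rewrite mulrA hx; ring.
  move/(mulfI (lt0r_neq0 px)): hx' => h2.
  have e3 : u x * Pr p `^ g^-1 = p x * M p `^ g^-1.
    have := congr1 (fun t => t `^ g^-1) h2.
    rewrite /= (powRM _ (powR_ge0 _ _) (ltW Prp)) (powRM _ (powR_ge0 _ _) (ltW Mpos)).
    by rewrite -!powRrM (mulfV gn0) (powRr1 (u0 x)) (powRr1 (p0 x)).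
  have Mg : M p `^ g^-1 != 0 by apply: lt0r_neq0; apply: powR_gt0.
  rewrite -[p x](mulfK Mg) -e3.
  ring.
have gi : - g^-1 != 0 by rewrite oppr_eq0 invr_eq0.
have gs : g < 0 \/ 0 < g by move: gn0; rewrite neq_lt => /orP.
split.
  rewrite (objE _ hoq) (objE _ hpq).
  case: gs => [gn|gp].
    have [h _] := cneg gn; rewrite lerD2r ler_pM2l; first exact: h.
    by rewrite oppr_gt0 invr_lt0.
  have [h _] := cpos gp; rewrite lerD2r ler_nM2l; first exact: h.
  by rewrite oppr_lt0 invr_gt0.
split; last exact: hD.
rewrite (objE _ hoq) (objE _ hpq) => /addIr/(mulfI gi) eK.
case: gs => [gn|gp].
  by have [_ /(_ eK) [l hl]] := cneg gn; apply: finl hl.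
by have [_ /(_ eK) [l hl]] := cpos gp; apply: finl hl.
Qed.
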